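(* Let $A$ be an associative (not necessarily unital) algebra over a field satisfying the identity $x_1\cdots x_n=x_{\sigma(1)}\cdots x_{\sigma(n)}$ for some $\sigma\in S_n$, and write $i=\sigma(1)$, $j=\sigma(n)$, where $i\ne 1$ and $j\ne n$. Then $H_{n+2}$ contains all permutations of $\{1,2,\ldots,i+1\}$ and all permutations of $\{j+1,\ldots,n+2\}$ (regarded as elements of $S_{n+2}$ fixing the remaining letters).
   Context: For each $k$, $H_k\subseteq S_k$ is the set of permutations $\tau$ such that $A$ satisfies $x_1\cdots x_k=x_{\tau(1)}\cdots x_{\tau(k)}$ (i.e. $a_1\cdots a_k=a_{\tau(1)}\cdots a_{\tau(k)}$ for all $a_1,\dots,a_k\in A$). *)

(* Defs.v *)
From mathcomp Require Import all_boot all_fingroup all_algebra.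
Set Implicit Arguments. Unset Strict Implicit. Unset Printing Implicit Defensive.
Import GRing.Theory.
Local Open Scope ring_scope.

(* A (not necessarily unital) associative algebra over a field K is
   encoded as a K-vector space A (lmodType K) with a bilinear associative
   multiplication mul : A -> A -> A. *)
Definition assoc_algebra (K : fieldType) (A : lmodType K) (mul : A -> A -> A) :=
  [/\ (forall x y z, mul x (mul y z) = mul (mul x y) z),
      (forall (c : K) x y z, mul (c *: x + y) z = c *: mul x z + mul y z)
    & (forall (c : K) x y z, mul x (c *: y + z) = c *: mul x y + mul x z)].

(* The empty word (k = 0)
   never occurs in the statement; it is given the value 0 arbitrarily. *)
Definition word (K : fieldType) (A : lmodType K) (mul : A -> A -> A) (s : seq A) : A :=
  if s is x :: s' then foldl mul x s' else 0.

(* A satisfies x_1...x_k = x_{tau(1)}...x_{tau(k)}; letters are indexed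
   0..k-1 (i.e. the letter m corresponds to m.+1 in the paper). *)
Definition satisfies_perm (K : fieldType) (A : lmodType K) (mul : A -> A -> A)
    (k : nat) (tau : 'S_k) : Prop :=
  forall a : 'I_k -> A,
    word mul [seq a m | m <- enum 'I_k] = word mul [seq a (tau m) | m <- enum 'I_k].

Definition in_H (K : fieldType) (A : lmodType K) (mul : A -> A -> A) (k : nat)
  (tau : 'S_k) : Prop := satisfies_perm mul tau.

(* Main.v *)
Require Import Defs.
From mathcomp Require Import all_boot all_fingroup all_algebra.
From mathcomp Require Import zify.
Import GRing.Theory.
Local Open Scope ring_scope.

Section Gen.
Variables (K : fieldType) (A : lmodType K) (mul : A -> A -> A).
Hypothesis massoc : forall x y z, mul x (mul y z) = mul (mul x y) z.

Lemma foldl_mulA z x s : foldl mul (mul z x) s = mul z (foldl mul x s).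
Proof. by elim: s x => [|y s IH] x //=; rewrite -massoc IH. Qed.

Lemma word_cons2 z x s : word mul (z :: x :: s) = mul z (word mul (x :: s)).
Proof. exact: foldl_mulA. Qed.

Lemma word_flat s1 x y s2 :
  word mul (s1 ++ mul x y :: s2) = word mul (s1 ++ x :: y :: s2).
Proof.
case: s1 => [|a s1] //=.
by rewrite !foldl_cat /= massoc.
Qed.

Lemma word_rcons_mul L y z : word mul (rcons L (mul y z)) = mul (word mul (rcons L y)) z.
Proof.
case: L => [|x L] //=.
by rewrite !foldl_rcons massoc.
Qed.

Variables (n k : nat).
Hypothesis k_gt0 : (0 < k)%N.
Hypothesis k_lt : (k < n)%N.
Hypothesis KL : forall p c q z, size p = k -> size (p ++ c :: q) = n ->
  word mul (p ++ mul z c :: q) = mul z (word mul (p ++ c :: q)).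

Lemma jump p z c q : size p = k -> size (p ++ c :: q) = n ->
  word mul (p ++ z :: c :: q) = word mul (z :: p ++ c :: q).
Proof.
move=> Hp Hs.
rewrite -word_flat KL //.
case: p Hp Hs => [|x p] Hp Hs; first by move: k_gt0; rewrite -Hp.
by rewrite cat_cons word_cons2.
Qed.

Lemma alpha t a b r : size t = k -> size r = (n - k)%N ->
  word mul (a :: t ++ b :: r) = word mul (t ++ a :: b :: r).
Proof.
move=> Ht Hr.
case: r Hr => [|r1 r] Hr; first by move: Hr => /=; lia.
have E1 : word mul (a :: t ++ b :: r1 :: r) = word mul (a :: t ++ mul b r1 :: r).
  exact: (esym (word_flat (a :: t) b r1 r)).
have E2 : word mul (t ++ a :: b :: r1 :: r) = word mul (t ++ a :: mul b r1 :: r).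
  by have := word_flat (rcons t a) b r1 r; rewrite !cat_rcons => ->.
rewrite E1 E2 jump //.
rewrite size_cat /= Ht; move: Hr => /= Hr; lia.
Qed.

Lemma rho z ys r : size ys = k.+1 -> size r = (n - k)%N ->
  word mul (z :: ys ++ r) = word mul (ys ++ z :: r).
Proof.
move=> Hy Hr.
case: r Hr => [|r1 r] Hr; first by move: Hr => /=; lia.
case: ys Hy => [|y1 [|y2 ys]] Hy; [by [] | by move: Hy k_gt0 => /= [] <- | ].
have E1 : word mul (z :: y1 :: y2 :: ys ++ r1 :: r) = word mul (z :: mul y1 y2 :: ys ++ r1 :: r).
  exact: (esym (word_flat [:: z] y1 y2 (ys ++ r1 :: r))).
have E2 : word mul (y1 :: y2 :: ys ++ z :: r1 :: r) = word mul (mul y1 y2 :: ys ++ z :: r1 :: r).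
  exact: (esym (word_flat [::] y1 y2 (ys ++ z :: r1 :: r))).
rewrite E1 E2.
have := jump (mul y1 y2 :: ys) z r1 r.
rewrite !cat_cons => -> //.
  by move: Hy => /= [] ->.
rewrite /= size_cat /=; move: Hy Hr => /= [] Hy Hr; lia.
Qed.

Lemma swapk t a b r : size t = k -> size r = (n - k)%N ->
  word mul (t ++ a :: b :: r) = word mul (t ++ b :: a :: r).
Proof.
move=> Ht Hr.
rewrite -alpha //.
have := rho a (t ++ [:: b]) r; rewrite -!catA /= => -> //.
by rewrite size_cat Ht addn1.
Qed.

Lemma rotblock v w r : size (v ++ w) = k.+2 -> size r = (n - k)%N ->
  word mul (v ++ w ++ r) = word mul (w ++ v ++ r).
Proof.
elim: v w => [|x v IH] w Hs Hr; first by [].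
have := rho x (v ++ w) r; rewrite -catA => -> //; last first.
  by move: Hs; rewrite /= => -[].
rewrite -catA.
have := IH (rcons w x); rewrite !cat_rcons => -> //.
by move: Hs; rewrite /= !size_cat size_rcons; lia.
Qed.

Lemma swapj t a b t2 r : (size t + 2 + size t2)%N = k.+2 -> size r = (n - k)%N ->
  word mul (t ++ a :: b :: t2 ++ r) = word mul (t ++ b :: a :: t2 ++ r).
Proof.
move=> Hs Hr.
have R1 u : word mul ((t ++ [:: u.1; u.2]) ++ t2 ++ r) = word mul (t2 ++ (t ++ [:: u.1; u.2]) ++ r).
  apply: rotblock => //; rewrite !size_cat /=; lia.
have := R1 (a, b); have := R1 (b, a); rewrite /= -!catA /= => -> ->.
have := swapk (t2 ++ t) a b r; rewrite -!catA => -> //.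
rewrite size_cat; lia.
Qed.

Lemma swapgen t a b s : (size t + 2 <= k.+2)%N -> size (t ++ a :: b :: s) = n.+2 ->
  word mul (t ++ a :: b :: s) = word mul (t ++ b :: a :: s).
Proof.
move=> H1 H2.
rewrite -(cat_take_drop (k - size t) s).
apply: swapj; rewrite ?size_take ?size_drop; move: H2; rewrite size_cat /=.
  move=> H2; case: ltnP; lia.
lia.
Qed.

Lemma movefront p v x s : (size p + size v + 1 <= k.+2)%N ->
  size (p ++ v ++ x :: s) = n.+2 ->
  word mul (p ++ v ++ x :: s) = word mul (p ++ x :: v ++ s).
Proof.
elim: v p => [|y v IH] p H1 H2 //.
rewrite /= -cat_rcons IH; last by move: H2; rewrite !size_cat size_rcons /=; lia.
  rewrite cat_rcons swapgen //.
    by move: H1 => /=; lia.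
  by move: H2; rewrite !size_cat /= !size_cat /=; lia.
by move: H1; rewrite size_rcons /=; lia.
Qed.

Lemma permblock p u v r : perm_eq u v -> (size (p ++ u) <= k.+2)%N ->
  size (p ++ u ++ r) = n.+2 ->
  word mul (p ++ u ++ r) = word mul (p ++ v ++ r).
Proof.
elim: u p v => [|x u IH] p v Huv H1 H2.
  by move: (perm_size Huv) => /= /esym /size0nil ->.
have : x \in v by rewrite -(perm_mem Huv) mem_head.
move=> Hx; case/splitPr: Hx Huv => v1 v2 Huv.
have Hs := perm_size Huv; rewrite /= size_cat /= in Hs.
rewrite -catA movefront; last 2 first.
- by move: H1; rewrite !size_cat /=; lia.
- by move: H2; rewrite !size_cat /= !size_cat /=; lia.
have := IH (rcons p x) (v1 ++ v2); rewrite !cat_rcons -catA => -> //.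
by rewrite -(perm_cons x) (perm_trans Huv) // -cat1s perm_catCA.
Qed.

Lemma GL u v r : perm_eq u v -> size u = k.+2 -> size r = (n - k)%N ->
  word mul (u ++ r) = word mul (v ++ r).
Proof.
move=> Huv Hu Hr; apply: (permblock [::]) => //=; first by rewrite Hu.
by rewrite size_cat Hu Hr; lia.
Qed.

End Gen.

Lemma set_nth_catc (T : Type) (x0 : T) p c q y :
  set_nth x0 (p ++ c :: q) (size p) y = p ++ y :: q.
Proof. by elim: p => //= a p ->. Qed.

Lemma nth_catc (T : Type) (x0 : T) p c q : nth x0 (p ++ c :: q) (size p) = c.
Proof. by rewrite nth_cat ltnn subnn. Qed.

Lemma block_perm N (tau : 'S_N) (P : pred 'I_N) (S : seq 'I_N) :
  uniq S -> (forall m, (m \in S) = P m) -> (forall m, ~~ P m -> tau m = m) ->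
  perm_eq (map tau S) S.
Proof.
move=> US HS Ht.
have HP m : P (tau m) = P m.
  case Pm: (P m); last by rewrite Ht ?Pm.
  apply/negP => /negP H; have := Ht _ H => /perm_inj E.
  by move: H; rewrite E Pm.
apply: uniq_perm => //; first by rewrite (map_inj_uniq (@perm_inj _ tau)).
move=> x; apply/mapP/idP.
  by case=> m; rewrite HS => Hm ->; rewrite HS HP.
move=> Hx; exists (tau^-1 x)%g; last by rewrite permKV.
by rewrite HS -HP permKV -HS.
Qed.

Section Main.
Variables (K : fieldType) (A : lmodType K) (mul : A -> A -> A).
Hypothesis massoc : forall x y z, mul x (mul y z) = mul (mul x y) z.
Variables (n : nat) (sigma : 'S_n) (first last : 'I_n).
Hypothesis Hsat : satisfies_perm mul sigma.
Hypothesis Hfirst : nat_of_ord first = 0%N.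
Hypothesis Hlast : nat_of_ord last = n.-1.

Lemma map_nth_enum (s : seq A) : size s = n ->
  map (fun m : 'I_n => nth 0 s m) (enum 'I_n) = s.
Proof.
move=> Hs.
rewrite (map_comp (nth 0 s) val) val_enum_ord map_nth_iota0 ?Hs //.
by rewrite -Hs take_size.
Qed.

Lemma KLleft s z : size s = n ->
  word mul (set_nth 0 s (sigma first) (mul z (nth 0 s (sigma first)))) = mul z (word mul s).
Proof.
move=> Hs.
set k := nat_of_ord (sigma first).
set s' := set_nth _ _ _ _.
have Hs' : size s' = n by rewrite size_set_nth Hs; apply/maxn_idPr; exact: ltn_ord.
have H1 := Hsat (fun m => nth 0 s' m); have H0 := Hsat (fun m => nth 0 s m).
rewrite map_nth_enum // in H1; rewrite map_nth_enum // in H0.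
rewrite H1 H0.
have Hu := enum_uniq 'I_n.
move Ee: (enum 'I_n) Hu => e Hu.
case: e Ee Hu => [|x e'] Ee Hu.
  by have := mem_enum 'I_n first; rewrite Ee.
have Ex : x = first by have := nth_ord_enum first first; rewrite Ee Hfirst.
subst x.
rewrite /= /s' nth_set_nth /= eqxx.
have -> : [seq nth 0 s' (sigma m) | m <- e'] = [seq nth 0 s (sigma m) | m <- e'].
  apply/eq_in_map => m Hm; rewrite /s' nth_set_nth /=.
  case: eqP => // /val_inj /perm_inj E.
  by move: Hu; rewrite /= -E Hm.
by rewrite foldl_mulA.
Qed.

Lemma KLleft' p c q z : size p = sigma first -> size (p ++ c :: q) = n ->
  word mul (p ++ mul z c :: q) = mul z (word mul (p ++ c :: q)).
Proof.
move=> Hp Hs.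
have := KLleft (p ++ c :: q) z Hs; by rewrite -Hp nth_catc set_nth_catc.
Qed.

Lemma KLright s z : size s = n ->
  word mul (set_nth 0 s (sigma last) (mul (nth 0 s (sigma last)) z)) = mul (word mul s) z.
Proof.
move=> Hs.
set s' := set_nth _ _ _ _.
have Hs' : size s' = n by rewrite size_set_nth Hs; apply/maxn_idPr; exact: ltn_ord.
have H1 := Hsat (fun m => nth 0 s' m); have H0 := Hsat (fun m => nth 0 s m).
rewrite map_nth_enum // in H1; rewrite map_nth_enum // in H0.
rewrite H1 H0.
have Hu := enum_uniq 'I_n.
have Hsz := size_enum_ord n.
move Ee: (enum 'I_n) Hu Hsz => e Hu Hsz.
case/lastP: e Ee Hu Hsz => [|e' x] Ee Hu Hsz.
  by have := mem_enum 'I_n first; rewrite Ee.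
have Ex : x = last.
  have := nth_ord_enum last last; rewrite Ee Hlast nth_rcons.
  have Hse : size e' = n.-1 by move: Hsz; rewrite size_rcons => /(congr1 predn).
  by rewrite Hse ltnn eqxx.
subst x.
rewrite !map_rcons /s' nth_set_nth /= eqxx.
have -> : [seq nth 0 s' (sigma m) | m <- e'] = [seq nth 0 s (sigma m) | m <- e'].
  apply/eq_in_map => m Hm; rewrite /s' nth_set_nth /=.
  case: eqP => // /val_inj /perm_inj E.
  by move: Hu; rewrite rcons_uniq -E Hm.
by rewrite word_rcons_mul.
Qed.

Lemma KLright' p c q z : size p = sigma last -> size (p ++ c :: q) = n ->
  word mul (p ++ mul c z :: q) = mul (word mul (p ++ c :: q)) z.
Proof.
move=> Hp Hs.
have := KLright (p ++ c :: q) z Hs; by rewrite -Hp nth_catc set_nth_catc.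
Qed.

End Main.

Section Mirror.
Variables (K : fieldType) (A : lmodType K) (mul : A -> A -> A).
Hypothesis massoc : forall x y z, mul x (mul y z) = mul (mul x y) z.
Let mul' := fun x y => mul y x.
Lemma massoc' : forall x y z, mul' x (mul' y z) = mul' (mul' x y) z.
Proof. by move=> x y z; rewrite /mul' massoc. Qed.

Lemma word_rcons_ne L x : L != [::] -> word mul (rcons L x) = mul (word mul L) x.
Proof. by case: L => //= a L _; rewrite foldl_rcons. Qed.

Lemma word_rev s : word mul' s = word mul (rev s).
Proof.
elim: s => [|x s IH] //.
case: s IH => [|y s] IH //.
rewrite (@word_cons2 _ _ _ massoc') IH /mul' [rev (x :: _)]rev_cons word_rcons_ne //.
by rewrite rev_cons; case: (rev s).
Qed.
End Mirror.

Lemma enum_take_mem N c (m : 'I_N) : (c <= N)%N -> (m \in take c (enum 'I_N)) = (m < c)%N.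
Proof.
move=> H; rewrite -(mem_map val_inj) map_take val_enum_ord take_iota mem_iota /=.
by rewrite (minn_idPl H).
Qed.

Lemma enum_drop_mem N c (m : 'I_N) : (c <= N)%N -> (m \in drop c (enum 'I_N)) = (c <= m)%N.
Proof.
move=> H; rewrite -(mem_map val_inj) map_drop val_enum_ord drop_iota mem_iota /= add0n.
rewrite subnKC //; by rewrite ltn_ord andbT.
Qed.

Theorem lemma2p10 (K : fieldType) (A : lmodType K) (mul : A -> A -> A)
    (n : nat) (sigma : 'S_n) (first last : 'I_n) :
  assoc_algebra mul ->
  nat_of_ord first = 0%N -> nat_of_ord last = n.-1 ->
  satisfies_perm mul sigma ->
  sigma first != first -> sigma last != last ->
  (forall tau : 'S_(n.+2),
     (forall m : 'I_(n.+2), ~~ (m <= (sigma first).+1)%N -> tau m = m) ->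
     in_H mul tau) /\
  (forall tau : 'S_(n.+2),
     (forall m : 'I_(n.+2), ~~ ((sigma last).+1 <= m)%N -> tau m = m) ->
     in_H mul tau).
Proof.
move=> [massoc _ _] Hfirst Hlast Hsat Hf Hl.
have Ue := enum_uniq 'I_(n.+2).
have Se := size_enum_ord n.+2.
split=> tau Htau a.
- set k := nat_of_ord (sigma first).
  have k_gt0 : (0 < k)%N.
    rewrite lt0n; apply: contra Hf => /eqP Hk; apply/eqP/val_inj => /=; rewrite Hfirst; exact: Hk.
  have k_lt : (k < n)%N by exact: ltn_ord.
  have Hkn : (k.+2 <= n.+2)%N by lia.
  rewrite -(cat_take_drop k.+2 (enum 'I_(n.+2))) !map_cat.
  have -> : [seq a (tau m) | m <- drop k.+2 (enum 'I_n.+2)] = [seq a m | m <- drop k.+2 (enum 'I_n.+2)].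
    apply/eq_in_map => m; rewrite enum_drop_mem // => Hm; rewrite Htau //.
    by rewrite -ltnNge.
  apply: (@GL _ _ _ massoc _ _ k_gt0 k_lt).
  + by move=> p c q z; apply: KLleft'.
  + rewrite (map_comp a tau) perm_map // perm_sym.
    apply: (@block_perm _ tau (fun m : 'I_n.+2 => (m <= k.+1)%N)).
    * exact: take_uniq.
    * by move=> m; rewrite enum_take_mem.
    * exact: Htau.
  + by rewrite size_map size_take Se ltnS ltnS; case: ltnP => //; lia.
  + by rewrite size_map size_drop Se subSS.
- set j := nat_of_ord (sigma last).
  have j_lt : (j < n.-1)%N.
    have := ltn_ord (sigma last); rewrite -/j.
    have : j != n.-1 by apply: contra Hl => /eqP Hk; apply/eqP/val_inj; rewrite /= -/j Hk Hlast.
    lia.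
  have Hjn : (j.+1 <= n.+2)%N by lia.
  set mul' := fun x y => mul y x.
  have massoc' := @massoc' _ _ _ massoc.
  have WR s : word mul s = word mul' (rev s) by rewrite (@word_rev _ _ _ massoc) revK.
  rewrite !WR.
  rewrite -(cat_take_drop j.+1 (enum 'I_(n.+2))) !map_cat !rev_cat.
  have -> : [seq a (tau m) | m <- take j.+1 (enum 'I_n.+2)] = [seq a m | m <- take j.+1 (enum 'I_n.+2)].
    apply/eq_in_map => m; rewrite enum_take_mem // => Hm; rewrite Htau //.
    by rewrite -ltnNge.
  set k := (n.-1 - j)%N.
  have k_gt0 : (0 < k)%N by rewrite /k; lia.
  have k_lt : (k < n)%N by rewrite /k; lia.
  apply: (@GL _ _ _ massoc' _ _ k_gt0 k_lt).
  + move=> p c q z Hp Hs.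
    rewrite !(@word_rev _ _ _ massoc) rev_cat rev_cons -cats1 -catA /=.
    rewrite /mul' (@KLright' _ _ _ massoc n sigma first last Hsat Hlast).
    * by rewrite rev_cat rev_cons -cats1 -catA.
    * move: Hs; rewrite size_rev size_cat /= Hp /k; lia.
    * move: Hs; rewrite !size_cat /= !size_rev; lia.
  + rewrite (map_comp a tau) perm_rev perm_sym perm_rev perm_map //.
    apply: (@block_perm _ tau (fun m : 'I_n.+2 => (j.+1 <= m)%N)).
    * exact: drop_uniq.
    * by move=> m; rewrite enum_drop_mem.
    * exact: Htau.
  + by rewrite size_rev size_map size_drop Se /k; lia.
  + by rewrite size_rev size_map size_take Se; case: ltnP; rewrite /k; lia.
Qed.
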